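(* Let $R$ be a commutative ring with identity and $M$ a non-zero comultiplication $R$-module with $\mathrm{Min}(M)=\{S_i\}_{i\in I}$, where $|I|>1$ and the $S_i$ are pairwise distinct. If $\Lambda$ is a non-empty proper finite subset of $I$, then $\sum_{\lambda\in\Lambda}S_\lambda$ is a non-large submodule of $M$.
   Context: An $R$-module $M$ is a comultiplication module if for every submodule $N$ of $M$ there is an ideal $I$ of $R$ with $N=\mathrm{Ann}_M(I)=\{m\in M: Im=0\}$. A submodule $N$ of $M$ is large (essential) in $M$ if $N\cap L\neq 0$ for every non-zero submodule $L$ of $M$. $\mathrm{Min}(M)$ denotes the set of minimal (i.e. simple) submodules of $M$. *)

(* Defs.v *)
From HB Require Import structures.
From mathcomp Require Import all_boot all_order all_algebra.
Set Implicit Arguments. Unset Strict Implicit. Unset Printing Implicit Defensive.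
Import GRing.Theory.
Local Open Scope ring_scope.

Section ModDefs.
Variables (R : comPzRingType) (M : lmodType R).

Definition submodule (N : M -> Prop) : Prop :=
  [/\ N 0, (forall x y, N x -> N y -> N (x + y)) &
      (forall (r : R) x, N x -> N (r *: x))].

Definition ideal (I : R -> Prop) : Prop :=
  [/\ I 0, (forall a b, I a -> I b -> I (a + b)) &
      (forall r a, I a -> I (r * a))].

Definition AnnM (I : R -> Prop) : M -> Prop :=
  fun m => forall r, I r -> r *: m = 0.

Definition same_sub (N L : M -> Prop) : Prop := forall m, N m <-> L m.

Definition comultiplication_module : Prop :=
  forall N, submodule N -> exists I, ideal I /\ same_sub N (AnnM I).

Definition nonzero_sub (N : M -> Prop) : Prop := exists x, N x /\ x <> 0.

Definition large (N : M -> Prop) : Prop :=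
  submodule N /\
  forall L, submodule L -> nonzero_sub L -> exists x, [/\ N x, L x & x <> 0].

Definition minimal_sub (S : M -> Prop) : Prop :=
  [/\ submodule S, nonzero_sub S &
      forall L, submodule L -> (forall x, L x -> S x) ->
                same_sub L (fun x => x = 0) \/ same_sub L S].

Definition sum_sub (N L : M -> Prop) : M -> Prop :=
  fun m => exists x y, [/\ N x, L y & m = x + y].

Fixpoint sum_list_sub (Ss : seq (M -> Prop)) : M -> Prop :=
  match Ss with
  | [::] => fun m => m = 0
  | S0 :: Ss' => sum_sub S0 (sum_list_sub Ss')
  end.

End ModDefs.

(* Main.v *)
Require Import Defs.
From Stdlib Require Lists.List.
From Stdlib Require Import Classical.
From HB Require Import structures.
From mathcomp Require Import all_boot all_order all_algebra.
Import GRing.Theory.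
Local Open Scope ring_scope.

Lemma scale_comm (R : comPzRingType) (M : lmodType R) (a b : R) (x : M) :
  a *: (b *: x) = b *: (a *: x).
Proof. by rewrite !scalerA mulrC. Qed.

Lemma sep (R : comPzRingType) (M : lmodType R) (I : Type) (S : I -> M -> Prop)
  (hcomul : comultiplication_module M)
  (hSmin : forall i, minimal_sub (S i))
  (hSdist : forall i j, i <> j -> ~ same_sub (S i) (S j)) i j :
  i <> j -> exists r : R, (forall y, S i y -> r *: y = 0) /\
                          (forall x, S j x -> x <> 0 -> r *: x <> 0).
Proof.
move=> hij.
have [r [hri hrj]] : exists r : R, (forall y, S i y -> r *: y = 0) /\
                          exists y, S j y /\ r *: y <> 0.
  apply: NNPP => hn.
  have hsub : forall r : R, (forall y, S i y -> r *: y = 0) ->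
                forall y, S j y -> r *: y = 0.
    move=> r hr y hy; apply: NNPP => hne; apply: hn; exists r; split=> //.
    by exists y.
  have [Si _ hSi] := hSmin i.
  have [J [hJ hSiJ]] := hcomul _ Si.
  have hji : forall x, S j x -> S i x.
    move=> x hx; apply/hSiJ => s hs; apply: (hsub s) => // y /hSiJ; exact.
  have [Sjs Sjn _] := hSmin j.
  case: (hSi _ Sjs hji) => [h0 | heq].
    by case: Sjn => x [hx hx0]; apply: hx0; apply/h0.
  by apply: (hSdist _ _ hij) => m; split => /heq.
exists r; split=> // x hx hx0 hrx.
have [Sjs _ Sjm] := hSmin j.
pose L := fun y => S j y /\ r *: y = 0.
have Ls : submodule L.
  case: Sjs => h0 hD hZ; split.
  - by split; [ | rewrite scaler0].
  - by move=> a b [ha ra] [hb rb]; split; [apply: hD | rewrite scalerDr ra rb addr0].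
  - by move=> s a [ha ra]; split; [apply: hZ | rewrite scale_comm ra scaler0].
case: (Sjm L Ls (fun y (h : L y) => proj1 h)) => [h0 | heq].
  by apply: hx0; apply/h0.
by case: hrj => y [hy hry]; apply: hry; case/heq: hy.
Qed.

Theorem lemma2p3 (R : comPzRingType) (M : lmodType R)
  (I : Type) (S : I -> M -> Prop)
  (hM0 : exists m : M, m <> 0)
  (hcomul : comultiplication_module M)
  (hSmin : forall i, minimal_sub (S i))
  (hSall : forall N, minimal_sub N -> exists i, same_sub N (S i))
  (hSdist : forall i j, i <> j -> ~ same_sub (S i) (S j))
  (hI : exists i j : I, i <> j)
  (Lam : seq I)
  (hLne : Lam <> [::])
  (hLprop : exists i, ~ Stdlib.Lists.List.In i Lam) :
  ~ large (sum_list_sub [seq S l | l <- Lam]).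
Proof.
case: hLprop => j hj [_ hlarge].
have key : forall L : seq I, ~ Stdlib.Lists.List.In j L ->
  exists r : R, (forall y, sum_list_sub [seq S l | l <- L] y -> r *: y = 0) /\
                (forall x, S j x -> x <> 0 -> r *: x <> 0).
  elim=> [|a L IH] /= hn.
    by exists 1; split=> [y ->|x _ hx]; [rewrite scaler0 | rewrite scale1r].
  have [r [hr1 hr2]] := IH (fun h => hn (or_intror h)).
  have [s [hs1 hs2]] := @sep R M I S hcomul hSmin hSdist a j (fun h => hn (or_introl h)).
  exists (s * r); split.
    move=> _ [y [z [hy hz ->]]].
    by rewrite scalerDr -scalerA scale_comm hs1 // scaler0 -scalerA hr1 // !scaler0 addr0.
  move=> x hx hx0; rewrite -scalerA; apply: hs2 (hr2 _ hx hx0).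
  have [[_ _ hZ] _ _] := hSmin j; exact: hZ.
have [r [hr1 hr2]] := key _ hj.
have [Sjs Sjn _] := hSmin j.
have [x [hN hx hx0]] := hlarge _ Sjs Sjn.
exact: hr2 _ hx hx0 (hr1 _ hN).
Qed.
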